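(* Let $k,n$ be positive integers with $n\geq2$ and $k\leq\lfloor n/2\rfloor$, and let $Z=(z_{\ell,r,s})\in\mathbb{C}^{\{1,\dots,k\}\times\{1,\dots,n\}\times\{1,\dots,n\}}$. Define $$\mathrm{gnhaf}(Z)=\frac{(n-2k)!}{n!}\sum_{r}\prod_{\ell=1}^k z_{\ell,r(2\ell-1),r(2\ell)},$$ where the sum runs over all injective maps $r:\{1,\dots,2k\}\to\{1,\dots,n\}$. Then $$|\mathrm{gnhaf}(Z)|\leq\prod_{\ell=1}^k\Big(\frac{1}{n(n-1)}\sum_{(r,s)}\Big|\tfrac12(z_{\ell,r,s}+z_{\ell,s,r})\Big|^2\Big)^{1/2}\leq\prod_{\ell=1}^k\Big(\frac{1}{n(n-1)}\sum_{(r,s)}|z_{\ell,r,s}|^2\Big)^{1/2},$$ where the sums run over ordered pairs $(r,s)$ of distinct elements of $\{1,\dots,n\}$. *)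

(* Defs.v *)
(* Complex numbers: an arbitrary numClosedFieldType C
   (e.g. algC, or complex R for R : realType). *)
From mathcomp Require Import all_boot all_order all_algebra.
From mathcomp Require Import zify.
Set Implicit Arguments. Unset Strict Implicit. Unset Printing Implicit Defensive.
Import Order.TTheory GRing.Theory Num.Theory.
Local Open Scope ring_scope.

(* 0-based indices: the informal pair (2l-1, 2l) for l = 1..k becomes
   (2l, 2l+1) for l : 'I_k, as elements of 'I_(2*k). *)
Lemma pair_fst_lt k (l : 'I_k) : (2 * l < 2 * k)%N.
Proof. by rewrite ltn_pmul2l. Qed.

Lemma pair_snd_lt k (l : 'I_k) : (2 * l + 1 < 2 * k)%N.
Proof.
have := ltn_ord l; lia.
Qed.

Definition pair_fst k (l : 'I_k) : 'I_(2 * k) := Ordinal (pair_fst_lt l).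
Definition pair_snd k (l : 'I_k) : 'I_(2 * k) := Ordinal (pair_snd_lt l).

Definition gnhaf (C : numClosedFieldType) (k n : nat)
    (Z : 'I_k -> 'I_n -> 'I_n -> C) : C :=
  ((n - 2 * k)`!)%:R / (n`!)%:R *
  \sum_(r : {ffun 'I_(2 * k) -> 'I_n} | injectiveb r)
     \prod_(l < k) Z l (r (pair_fst l)) (r (pair_snd l)).

(* Main.v *)
Require Import Defs.
From mathcomp Require Import all_boot all_order all_algebra.
From mathcomp Require Import fingroup perm.
From mathcomp Require Import zify ring.
Set Implicit Arguments. Unset Strict Implicit. Unset Printing Implicit Defensive.
Import Order.TTheory GRing.Theory Num.Theory.
Local Open Scope ring_scope.

Section Abstract.
Variable C : numClosedFieldType.
Implicit Types s X D V : C.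

Definition Inv s X D V := [/\ 0 <= X, 0 <= D, 0 <= V,
  D ^+ 2 + s * (1 - s) * X ^+ 2 <= s * V & (1 - s) * X ^+ 2 <= V].

Lemma sqr_real_ge0 (t : C) : t \is Num.real -> 0 <= t ^+ 2.
Proof. by move=> h; rewrite -realEsqr. Qed.

Ltac rtac := repeat first [ apply: rpredB | apply: rpredD | apply: rpredM
  | apply: rpred1 | apply: rpred0 | (apply: ger0_real; assumption) ].

Lemma Inv_comp0 s2 X1 X2 D1 D2 V1 V2 : 0 <= s2 -> s2 <= 1 ->
  Inv 0 X1 D1 V1 -> Inv s2 X2 D2 V2 ->
  D1 = 0 /\ (D1 * X2 + D2 * X1) ^+ 2 + s2 * (1 - s2) * (X1 * X2) ^+ 2
     <= s2 * (V1 * V2).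
Proof.
move=> s20 s21 [X10 D10 V10 c1 d1] [X20 D20 V20 c2 d2].
have D1z : D1 = 0.
  move: c1; rewrite !mul0r addr0 => c1.
  have : D1 ^+ 2 = 0 by apply/eqP; rewrite eq_le c1 sqr_real_ge0 //; rtac.
  by move/eqP; rewrite expf_eq0 /= => /eqP.
split => //.
rewrite D1z mul0r add0r subr0 mul1r in d1 *.
have -> : (D2 * X1) ^+ 2 + s2 * (1 - s2) * (X1 * X2) ^+ 2
   = X1 ^+ 2 * (D2 ^+ 2 + s2 * (1 - s2) * X2 ^+ 2) by ring.
have -> : s2 * (V1 * V2) = V1 * (s2 * V2) by ring.
apply: ler_pM => //; first by apply: sqr_real_ge0; rtac.
by apply: addr_ge0; [apply: sqr_real_ge0; rtac | rewrite !mulr_ge0 ?subr_ge0 // sqr_real_ge0 //; rtac].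
Qed.

Lemma Inv_comp s1 s2 X1 X2 D1 D2 V1 V2 : 0 <= s1 -> 0 <= s2 -> s1 + s2 <= 1 ->
  Inv s1 X1 D1 V1 -> Inv s2 X2 D2 V2 ->
  Inv (s1 + s2) (X1 * X2) (D1 * X2 + D2 * X1) (V1 * V2).
Proof.
move=> s10 s20 s12 I1 I2.
have s11 : s1 <= 1 by apply: le_trans s12; rewrite lerDl.
have s21 : s2 <= 1 by apply: le_trans s12; rewrite lerDr.
case: (I1) => X10 D10 V10 c1 d1; case: (I2) => X20 D20 V20 c2 d2.
split; first by rewrite mulr_ge0.
- by rewrite addr_ge0 // mulr_ge0.
- by rewrite mulr_ge0.
- move: (s10); rewrite le_eqVlt => /predU1P [s1z|s1p].
    rewrite -s1z add0r in I1 *.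
    by have [_ H] := Inv_comp0 s20 s21 I1 I2.
  move: (s20); rewrite le_eqVlt => /predU1P [s2z|s2p].
    rewrite -s2z addr0 in I2 *.
    have [_] := Inv_comp0 s10 s11 I2 I1.
    by rewrite [D2 * X1 + _]addrC (mulrC X2) (mulrC V2).
  rewrite -subr_ge0 -(pmulr_rge0 _ s1p) -(pmulr_rge0 _ s2p).
  set sg := s1 + s2.
  have -> : s2 * (s1 * (sg * (V1 * V2) - ((D1 * X2 + D2 * X1) ^+ 2
          + sg * (1 - sg) * (X1 * X2) ^+ 2)))
        = sg * (s2 * V2) * (s1 * V1 - (D1 ^+ 2 + s1 * (1 - s1) * X1 ^+ 2))
        + sg * (D1 ^+ 2 + s1 * (1 - s1) * X1 ^+ 2)
             * (s2 * V2 - (D2 ^+ 2 + s2 * (1 - s2) * X2 ^+ 2))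
        + (1 - sg) * (s2 * D1 * X2 - s1 * X1 * D2) ^+ 2
        + sg * (D1 * D2 - s1 * s2 * X1 * X2) ^+ 2.
    rewrite /sg; ring.
  have sg0 : 0 <= sg by rewrite addr_ge0.
  have sg1 : 0 <= 1 - sg by rewrite subr_ge0.
  have q1 : 0 <= 1 - s1 by rewrite subr_ge0.
  have A1 : 0 <= D1 ^+ 2 + s1 * (1 - s1) * X1 ^+ 2.
    by rewrite addr_ge0 ?mulr_ge0 ?exprn_ge0.
  have t1 : 0 <= sg * (s2 * V2) * (s1 * V1 - (D1 ^+ 2 + s1 * (1 - s1) * X1 ^+ 2)).
    by rewrite !mulr_ge0 // subr_ge0.
  have t2 : 0 <= sg * (D1 ^+ 2 + s1 * (1 - s1) * X1 ^+ 2)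
             * (s2 * V2 - (D2 ^+ 2 + s2 * (1 - s2) * X2 ^+ 2)).
    by rewrite !mulr_ge0 // subr_ge0.
  have t3 : 0 <= (1 - sg) * (s2 * D1 * X2 - s1 * X1 * D2) ^+ 2.
    by rewrite mulr_ge0 //; apply: sqr_real_ge0; rtac.
  have t4 : 0 <= sg * (D1 * D2 - s1 * s2 * X1 * X2) ^+ 2.
    by rewrite mulr_ge0 //; apply: sqr_real_ge0; rtac.
  by rewrite !addr_ge0.
- have q1 : 0 <= 1 - s1 by rewrite subr_ge0.
  have q2 : 0 <= 1 - s2 by rewrite subr_ge0.
  have x1 : 0 <= X1 ^+ 2 by rewrite exprn_ge0.
  have x2 : 0 <= X2 ^+ 2 by rewrite exprn_ge0.
  apply: le_trans (_ : (1 - s1) * X1 ^+ 2 * ((1 - s2) * X2 ^+ 2) <= _);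
    last by apply: ler_pM; rewrite ?mulr_ge0 // subr_ge0.
  have -> : (1 - s1) * X1 ^+ 2 * ((1 - s2) * X2 ^+ 2)
     = ((1 - (s1 + s2)) + s1 * s2) * (X1 * X2) ^+ 2 by ring.
  by rewrite ler_wpM2r ?exprn_ge0 ?mulr_ge0 // lerDl mulr_ge0.
Qed.

Lemma Inv_seq (I : eqType) (r : seq I) (s X D V : I -> C) : uniq r ->
  (forall i, 0 <= s i) -> \sum_(i <- r) s i <= 1 ->
  (forall i, Inv (s i) (X i) (D i) (V i)) ->
  Inv (\sum_(i <- r) s i) (\prod_(i <- r) X i)
      (\sum_(i <- r) D i * \prod_(j <- r | j != i) X j) (\prod_(i <- r) V i).
Proof.
move=> + s0 + HI; elim: r => [|i r IH] /=.
  move=> _ _; rewrite !big_nil; split; rewrite ?ler01 ?lexx ?expr0n /= ?(mul0r, mulr0, add0r, subr0, mul1r, expr1n, lexx) //.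
case/andP=> ir ur; rewrite !big_cons => sl.
have s1 : \sum_(j <- r) s j <= 1.
  by apply: le_trans sl; rewrite lerDr.
have IH' := IH ur s1.
rewrite eqxx /=.
have -> : \prod_(j <- r | j != i) X j = \prod_(j <- r) X j.
  rewrite big_seq_cond [RHS]big_seq; apply: eq_bigl => j.
  by case: (boolP (j \in r)) => //= jr; case: eqP => // ji; rewrite -ji jr in ir.
have -> : \sum_(l <- r) D l * \prod_(j <- i :: r | j != l) X j
        = X i * \sum_(l <- r) D l * \prod_(j <- r | j != l) X j.
  rewrite mulr_sumr big_seq [RHS]big_seq; apply: eq_bigr => l lr.
  rewrite big_cons.
  have -> : (i != l) by apply/eqP => il; rewrite il lr in ir.
  by rewrite mulrCA.
rewrite [X i * \sum_(l <- r) _]mulrC.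
exact: Inv_comp (s0 i) (sumr_ge0 _ (fun j _ => s0 j)) sl (HI i) IH'.
Qed.

Lemma Inv_fin (I : finType) (s X D V : I -> C) :
  (forall i, 0 <= s i) -> \sum_i s i <= 1 ->
  (forall i, Inv (s i) (X i) (D i) (V i)) ->
  Inv (\sum_i s i) (\prod_i X i)
      (\sum_i D i * \prod_(j | j != i) X j) (\prod_i V i).
Proof.
move=> s0 sl HI.
have := @Inv_seq I (enum I) s X D V (enum_uniq _) s0.
rewrite !big_enum /=.
move=> H; have {H} := H sl HI.
congr Inv.
by apply: eq_bigr => i _; rewrite big_enum_cond.
Qed.

Lemma Inv_final s X D V : 0 < s -> s <= 1 -> Inv s X D V ->
  (1 - s) * X + D <= sqrtC V.
Proof.
move=> s0 s1 [X0 D0 V0 c d].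
have q : 0 <= 1 - s by rewrite subr_ge0.
have E0 : 0 <= (1 - s) * X + D by rewrite addr_ge0 ?mulr_ge0.
rewrite -(sqrCK E0) ler_sqrtC ?qualifE /= ?exprn_ge0 //.
rewrite -(ler_pM2l s0); apply: le_trans c.
rewrite -subr_ge0.
have -> : D ^+ 2 + s * (1 - s) * X ^+ 2 - s * ((1 - s) * X + D) ^+ 2
   = (1 - s) * (D - s * X) ^+ 2 by ring.
have s0w : 0 <= s := ltW s0.
by rewrite mulr_ge0 //; apply: sqr_real_ge0; rtac.
Qed.
End Abstract.

Section Comb.
Variables (C : numClosedFieldType) (k n : nat) (f : 'I_k -> 'I_n -> 'I_n -> C).
Local Notation m := (2 * k)%N.
Implicit Types (A : {set 'I_n}) (J : {set 'I_m}) (rho r : {ffun 'I_m -> 'I_n}) (u : 'I_n) (i : 'I_m) (l : 'I_k).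

Definition Pr (A : {set 'I_n}) (J : {set 'I_m}) (rho r : {ffun 'I_m -> 'I_n}) : bool :=
  [&& [forall i, (i \notin J) ==> (r i == rho i)],
      [forall i in J, r i \in A] &
      [forall i in J, [forall j in J, (r i == r j) ==> (i == j)]]].

Definition F (r : {ffun 'I_m -> 'I_n}) := \prod_l f l (r (pair_fst l)) (r (pair_snd l)).
Definition T A J rho := \sum_(r | Pr A J rho r) F r.
Definition upd (rho : {ffun 'I_m -> 'I_n}) i u : {ffun 'I_m -> 'I_n} :=
  [ffun j => if j == i then u else rho j].

Lemma PrP A J rho r : reflect
  [/\ forall i, i \notin J -> r i = rho i, forall i, i \in J -> r i \in A &
      forall i j, i \in J -> j \in J -> r i = r j -> i = j] (Pr A J rho r).
Proof.
apply: (iffP and3P) => [[/forallP h1 /forall_inP h2 /forall_inP h3]|[h1 h2 h3]].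
  split => //.
  - by move=> i iJ; apply/eqP; move: (h1 i); rewrite iJ.
  - move=> i j iJ jJ e; move: (h3 i iJ) => /forall_inP /(_ j jJ).
    by rewrite e eqxx => /eqP.
split.
- by apply/forallP => i; apply/implyP => iJ; rewrite h1.
- by apply/forall_inP.
- apply/forall_inP => i iJ; apply/forall_inP => j jJ; apply/implyP => /eqP e.
  by rewrite (h3 i j).
Qed.

Lemma Pr_notu A J rho r u :
  Pr (A :\ u) J rho r = Pr A J rho r && ~~ [exists i in J, r i == u].
Proof.
apply/idP/idP.
  move/PrP => [h1 h2 h3]; apply/andP; split.
    apply/PrP; split => // i iJ; move: (h2 i iJ); rewrite in_setD1 => /andP[].
    by [].
  rewrite negb_exists_in; apply/forall_inP => i iJ.
  by move: (h2 i iJ); rewrite in_setD1 => /andP[].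
case/andP => /PrP [h1 h2 h3]; rewrite negb_exists_in => /forall_inP h4.
apply/PrP; split => // i iJ; rewrite in_setD1 h2 // andbT.
exact: h4.
Qed.

Lemma Pr_u A J rho r u i : i \in J -> u \in A ->
  Pr (A :\ u) (J :\ i) (upd rho i u) r = Pr A J rho r && (r i == u).
Proof.
move=> iJ uA; apply/idP/idP.
  move/PrP => [h1 h2 h3].
  have riu : r i = u by rewrite h1 ?ffunE ?eqxx // in_setD1 eqxx.
  rewrite riu eqxx andbT; apply/PrP; split.
  - move=> j jJ; rewrite h1; first by rewrite ffunE; case: eqP => // ji; rewrite ji iJ in jJ.
    by rewrite in_setD1 (negbTE jJ) andbF.
  - move=> j jJ; case: (eqVneq j i) => [->|ji]; first by rewrite riu.
    by move: (h2 j); rewrite !in_setD1 ji jJ => /(_ isT) /andP[].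
  - move=> j j' jJ j'J e.
    case: (eqVneq j i) => [ji|ji]; case: (eqVneq j' i) => [j'i|j'i].
    + by rewrite ji j'i.
    + by move: (h2 j'); rewrite !in_setD1 j'i j'J -e ji riu eqxx => /(_ isT).
    + by move: (h2 j); rewrite !in_setD1 ji jJ e j'i riu eqxx => /(_ isT).
    + by apply: h3; rewrite // in_setD1 ?ji ?j'i.
case/andP => /PrP [h1 h2 h3] /eqP riu; apply/PrP; split.
- move=> j; rewrite in_setD1 negb_and negbK ffunE => /orP [/eqP ->|jJ].
    by rewrite eqxx.
  by rewrite h1 //; case: eqP => // ji; rewrite ji iJ in jJ.
- move=> j; rewrite !in_setD1 => /andP [ji jJ]; rewrite h2 // andbT.
  apply/eqP => e; move/eqP: ji; apply; apply: h3 => //; by rewrite e riu.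
- move=> j j'; rewrite !in_setD1 => /andP [_ jJ] /andP [_ j'J]; exact: h3.
Qed.

Lemma T_split A J rho u : u \in A ->
  T A J rho = T (A :\ u) J rho + \sum_(i in J) T (A :\ u) (J :\ i) (upd rho i u).
Proof.
move=> uA; rewrite /T (bigID (fun r => [exists i in J, r i == u])) /= addrC.
congr (_ + _); first by apply: eq_bigl => r; rewrite Pr_notu.
rewrite (eq_bigr (fun i => \sum_(r | Pr A J rho r && (r i == u)) F r)); last first.
  by move=> i iJ; apply: eq_bigl => r; rewrite Pr_u.
rewrite [RHS](eq_bigr (fun i => \sum_r (if Pr A J rho r && (r i == u) then F r else 0)));
  last by move=> i _; rewrite big_mkcond.
rewrite [RHS]exchange_big /= [LHS]big_mkcond /=; apply: eq_bigr => r _.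
case: (boolP (Pr A J rho r)) => /= Pr_r; last by rewrite big1.
case: (boolP [exists i in J, r i == u]) => [/exists_inP [i0 i0J /eqP ri0]|].
  rewrite (bigD1 i0) //= ri0 eqxx big1 ?addr0 // => i /andP [iJ ii0].
  case: eqP => // riu.
  by move/PrP: Pr_r => [_ _ h3]; move: ii0; rewrite (h3 i i0) ?eqxx // riu.
rewrite negb_exists_in => /forall_inP h; rewrite big1 // => i iJ.
by rewrite (negbTE (h i iJ)).
Qed.


Lemma Pr_card A J rho r : Pr A J rho r -> (#|J| <= #|A|)%N.
Proof.
move/PrP => [_ h2 h3].
have <- : #|r @: J| = #|J| by apply: card_in_imset => i j iJ jJ; exact: h3.
apply: subset_leq_card; apply/subsetP => _ /imsetP [i iJ ->]; exact: h2.
Qed.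

Lemma T_zero A J rho : (#|A| < #|J|)%N -> T A J rho = 0.
Proof.
move=> lt; rewrite /T big_mkcond big1 // => r _; case: ifP => // /Pr_card.
by rewrite leqNgt lt.
Qed.

Lemma T_empty A rho : T A set0 rho = F rho.
Proof.
rewrite /T (big_pred1 rho) // => r /=; apply/idP/eqP.
  by move/PrP => [h1 _ _]; apply/ffunP => i; rewrite h1 ?in_set0.
by move=> ->; apply/PrP; split => // i; rewrite in_set0.
Qed.

Lemma lof_proof (i : 'I_m) : (i %/ 2 < k)%N.
Proof. have := ltn_ord i; lia. Qed.
Definition lof (i : 'I_m) : 'I_k := Ordinal (lof_proof i).

Lemma lof_fst l : lof (pair_fst l) = l.
Proof. apply: val_inj => /=; lia. Qed.
Lemma lof_snd l : lof (pair_snd l) = l.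
Proof. apply: val_inj => /=; lia. Qed.
Lemma fst_snd l : pair_fst l != pair_snd l.
Proof. apply/eqP => /(congr1 val) /=; lia. Qed.
Lemma lofP i l : lof i = l -> i = pair_fst l \/ i = pair_snd l.
Proof.
move=> /(congr1 val) /= h.
have : (i = 2 * l :> nat \/ i = 2 * l + 1 :> nat)%N by lia.
by case=> h'; [left|right]; apply: val_inj.
Qed.

Lemma sum_lof (G : 'I_m -> C) l J :
  \sum_(i in J | lof i == l) G i =
  (if pair_fst l \in J then G (pair_fst l) else 0) +
  (if pair_snd l \in J then G (pair_snd l) else 0).
Proof.
rewrite big_mkcondl /= (bigD1 (pair_fst l)) ?lof_fst //= (bigD1 (pair_snd l)) /=;
  last by rewrite lof_snd eqxx eq_sym fst_snd.
rewrite big1 ?addr0 // => i /andP [/andP [/eqP /lofP [] -> ]].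
  by rewrite eqxx.
by move=> _; rewrite eqxx.
Qed.


Definition nrm1 A (h : 'I_n -> C) := (#|A|%:R)^-1 * \sum_(v in A) h v ^+ 2.
Definition nrm2 A (g : 'I_n -> 'I_n -> C) :=
  ((#|A| * (#|A| - 1))%:R)^-1 * \sum_(v in A) \sum_(w in A | w != v) g v w ^+ 2.
Definition nu l A J rho :=
  if pair_fst l \in J then
    (if pair_snd l \in J then nrm2 A (f l)
     else nrm1 A (fun v => f l v (rho (pair_snd l))))
  else (if pair_snd l \in J then nrm1 A (fun v => f l (rho (pair_fst l)) v)
        else f l (rho (pair_fst l)) (rho (pair_snd l)) ^+ 2).

Lemma sum1_split A u (h : 'I_n -> C) : u \in A ->
  \sum_(v in A) h v = h u + \sum_(v in A :\ u) h v.
Proof.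
move=> uA; rewrite (bigD1 u) //=; congr (_ + _); apply: eq_bigl => v.
by rewrite in_setD1 andbC.
Qed.

Lemma sum2_split A u (g : 'I_n -> 'I_n -> C) : u \in A ->
  \sum_(v in A) \sum_(w in A | w != v) g v w =
  \sum_(v in A :\ u) \sum_(w in A :\ u | w != v) g v w
  + \sum_(w in A :\ u) g u w + \sum_(v in A :\ u) g v u.
Proof.
move=> uA; rewrite (sum1_split _ uA) addrC -addrA (addrC (\sum_(w in A :\ u) g u w)) addrA.
congr (_ + _).
  rewrite -big_split /=; apply: eq_bigr => v; rewrite in_setD1 => /andP [vu vA].
  rewrite (bigD1 u) /=; last by rewrite uA eq_sym.
  rewrite addrC; congr (_ + _); apply: eq_bigl => w.
  by rewrite in_setD1; case: (w \in A); case: (w == u); case: (w == v).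
apply: eq_bigl => w; rewrite in_setD1.
by rewrite andbC.
Qed.

Lemma card_nrm1 A h : #|A|%:R * nrm1 A h = \sum_(v in A) h v ^+ 2.
Proof.
rewrite /nrm1 mulrA; case: (eqVneq #|A| 0%N) => [/cards0_eq ->|].
  by rewrite big_set0 mulr0.
by move=> h0; rewrite mulfV ?mul1r // pnatr_eq0.
Qed.

Lemma card_nrm2 A g : (#|A| * (#|A| - 1))%:R * nrm2 A g =
  \sum_(v in A) \sum_(w in A | w != v) g v w ^+ 2.
Proof.
rewrite /nrm2 mulrA; case: (eqVneq (#|A| * (#|A| - 1))%N 0%N) => [h0|h0]; last first.
  by rewrite mulfV ?mul1r // pnatr_eq0.
have : (#|A| <= 1)%N by nia.
move/card_le1_eqP => h1; rewrite h0 mul0r mul0r big1 // => v vA.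
by rewrite big1 // => w /andP [wA]; rewrite (h1 w v wA vA) eqxx.
Qed.

Lemma nu_frame l A J rho i u : i != pair_fst l -> i != pair_snd l ->
  nu l A (J :\ i) (upd rho i u) = nu l A J rho.
Proof.
move=> h1 h2; rewrite /nu !in_setD1 ![_ == i]eq_sym (negbTE h1) (negbTE h2) /=.
by rewrite !ffunE ![_ == i]eq_sym (negbTE h1) (negbTE h2).
Qed.

Hypothesis f0 : forall l a b, 0 <= f l a b.

Lemma nrm1_ge0 A h : (forall v, 0 <= h v) -> 0 <= nrm1 A h.
Proof.
by move=> h0; rewrite mulr_ge0 ?invr_ge0 ?ler0n // sumr_ge0 // => v _; rewrite exprn_ge0.
Qed.

Lemma nrm2_ge0 A g : (forall v w, 0 <= g v w) -> 0 <= nrm2 A g.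
Proof.
move=> h0; rewrite mulr_ge0 ?invr_ge0 ?ler0n // sumr_ge0 // => v _.
by rewrite sumr_ge0 // => w _; rewrite exprn_ge0.
Qed.

Lemma nu_ge0 l A J rho : 0 <= nu l A J rho.
Proof.
rewrite /nu; case: ifP => _; case: ifP => _;
  by rewrite ?nrm1_ge0 ?nrm2_ge0 ?exprn_ge0.
Qed.


Lemma Inv_one A u (h : 'I_n -> C) : (forall v, 0 <= h v) -> u \in A ->
  Inv (1 / #|A|%:R) (sqrtC (nrm1 (A :\ u) h)) (h u / #|A|%:R) (nrm1 A h).
Proof.
move=> h0 uA.
have cA : #|A| = (#|A :\ u|).+1 by rewrite (cardsD1 u A) uA.
set Q := \sum_(v in A :\ u) h v ^+ 2.
have H1 := card_nrm1 (A :\ u) h; have H2 := card_nrm1 A h.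
rewrite (sum1_split (fun v => h v ^+ 2) uA) -/Q cA in H2.
rewrite cA.
set x := (#|A :\ u|)%:R : C in H1 H2 *.
have x0 : 0 <= x by rewrite ler0n.
have -> : (#|A :\ u|.+1)%:R = x + 1 :> C by rewrite mulrSr.
rewrite mulrSr -/x in H2.
have x1 : x + 1 != 0 by rewrite lt0r_neq0 // ltr_wpDl.
have Y0 : 0 <= nrm1 (A :\ u) h by apply: nrm1_ge0.
have V0 : 0 <= nrm1 A h by apply: nrm1_ge0.
have hu0 := h0 u.
have Q0 : 0 <= Q by rewrite sumr_ge0 // => v _; rewrite exprn_ge0.
have xY : x * nrm1 (A :\ u) h = Q by [].
have V : nrm1 A h = (h u ^+ 2 + Q) / (x + 1).
  by rewrite -H2; field.
split.
- by rewrite sqrtC_ge0.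
- by rewrite divr_ge0 // addr_ge0.
- done.
- rewrite sqrtCK V -subr_ge0.
  have -> : 1 / (x + 1) * (1 - 1 / (x + 1)) * nrm1 (A :\ u) h
      = (x * nrm1 (A :\ u) h) / (x + 1) ^+ 2 by field.
  rewrite xY.
  have -> : 1 / (x + 1) * ((h u ^+ 2 + Q) / (x + 1)) -
     ((h u / (x + 1)) ^+ 2 + Q / (x + 1) ^+ 2) = 0 by field.
  by [].
- rewrite sqrtCK V.
  have -> : (1 - 1 / (x + 1)) * nrm1 (A :\ u) h = (x * nrm1 (A :\ u) h) / (x + 1)
    by field.
  rewrite xY ler_wpM2r ?invr_ge0 ?addr_ge0 ?ler01 // lerDr exprn_ge0 //.
Qed.


Lemma Inv_two A u (g : 'I_n -> 'I_n -> C) : (forall v w, 0 <= g v w) -> u \in A ->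
  (2 <= #|A|)%N ->
  Inv (2 / #|A|%:R) (sqrtC (nrm2 (A :\ u) g))
      ((sqrtC (nrm1 (A :\ u) (g u)) + sqrtC (nrm1 (A :\ u) (fun v => g v u))) / #|A|%:R)
      (nrm2 A g).
Proof.
move=> g0 uA cA2.
have cA : #|A| = (#|A :\ u|).+1 by rewrite (cardsD1 u A) uA.
set P := \sum_(v in A :\ u) \sum_(w in A :\ u | w != v) g v w ^+ 2.
set q1 := sqrtC (nrm1 (A :\ u) (g u)).
set q2 := sqrtC (nrm1 (A :\ u) (fun v => g v u)).
have m1 := card_nrm1 (A :\ u) (g u).
have m2 := card_nrm1 (A :\ u) (fun v => g v u).
have H1 := card_nrm2 (A :\ u) g.
have H2 := card_nrm2 A g.
rewrite (sum2_split (fun v w => g v w ^+ 2) uA) -/P cA in H2.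
rewrite -m1 -m2 in H2.
rewrite -(sqrtCK (nrm1 _ (g u))) -/q1 -(sqrtCK (nrm1 _ (fun v => g v u))) -/q2 in H2.
move: cA2; rewrite cA ltnS; case E: #|A :\ u| => [//|b] _.
rewrite E in H1 H2 *.
have e3 : (b.+2 - 1)%N = b.+1 by lia.
rewrite e3 in H2.
have e4 : (b.+1 - 1)%N = b by lia.
rewrite e4 in H1.
rewrite -/P in H1.
set x := b%:R : C in H1 H2 *.
have x0 : 0 <= x by rewrite ler0n.
have e1 : (b.+1)%:R = x + 1 :> C by rewrite -addn1 natrD.
have e2 : (b.+2)%:R = x + 2 :> C by rewrite -addn2 natrD.
rewrite !natrM e1 e2 in H1 H2 *.
have x1 : x + 1 != 0 by rewrite lt0r_neq0 // ltr_wpDl.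
have x2 : x + 2 != 0 by rewrite lt0r_neq0 // ltr_wpDl.
have Y0 : 0 <= nrm2 (A :\ u) g by apply: nrm2_ge0.
have V0 : 0 <= nrm2 A g by apply: nrm2_ge0.
have q10 : 0 <= q1 by rewrite sqrtC_ge0 nrm1_ge0.
have q20 : 0 <= q2 by rewrite sqrtC_ge0 nrm1_ge0.
have P0 : 0 <= P by rewrite sumr_ge0 // => v _; rewrite sumr_ge0 // => w _; rewrite exprn_ge0.
have xY : x * nrm2 (A :\ u) g = P / (x + 1).
  by rewrite -H1; field.
have V : nrm2 A g = (P + (x + 1) * q1 ^+ 2 + (x + 1) * q2 ^+ 2) / ((x + 2) * (x + 1)).
  by rewrite -H2; field; rewrite x1 x2.
split.
- by rewrite sqrtC_ge0.
- by rewrite divr_ge0 ?addr_ge0 ?ler0n.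
- done.
- rewrite sqrtCK V -subr_ge0.
  have -> : 2 / (x + 2) * (1 - 2 / (x + 2)) * nrm2 (A :\ u) g
      = 2 * (x * nrm2 (A :\ u) g) / (x + 2) ^+ 2 by field; rewrite ?x1 ?x2.
  rewrite xY.
  have -> : 2 / (x + 2) * ((P + (x + 1) * q1 ^+ 2 + (x + 1) * q2 ^+ 2) / ((x + 2) * (x + 1))) -
     (((q1 + q2) / (x + 2)) ^+ 2 + 2 * (P / (x + 1)) / (x + 2) ^+ 2)
     = (q1 - q2) ^+ 2 / (x + 2) ^+ 2 by field; rewrite ?x1 ?x2.
  apply: divr_ge0; first by apply: sqr_real_ge0; rewrite rpredB // ger0_real.
  by rewrite exprn_ge0 // addr_ge0 ?ler0n.
- rewrite sqrtCK V.
  have -> : (1 - 2 / (x + 2)) * nrm2 (A :\ u) g = (x * nrm2 (A :\ u) g) / (x + 2)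
    by field; rewrite ?x1 ?x2.
  rewrite xY -subr_ge0.
  have -> : (P + (x + 1) * q1 ^+ 2 + (x + 1) * q2 ^+ 2) / ((x + 2) * (x + 1)) -
     P / (x + 1) / (x + 2) = (q1 ^+ 2 + q2 ^+ 2) / (x + 2) by field; rewrite ?x1 ?x2.
  by rewrite divr_ge0 ?addr_ge0 ?exprn_ge0 ?ler0n.
Qed.


Lemma sqrtC_prod (I : finType) (G : I -> C) : (forall x, 0 <= G x) ->
  sqrtC (\prod_x G x) = \prod_x sqrtC (G x).
Proof.
move=> G0.
have H : forall r : seq I, sqrtC (\prod_(x <- r) G x) = \prod_(x <- r) sqrtC (G x).
  elim => [|y r IH]; first by rewrite !big_nil sqrtC1.
  by rewrite !big_cons sqrtCM ?IH // qualifE /= ?prodr_ge0.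
exact: H.
Qed.

Lemma Inv_l l A J rho u : u \in A -> (#|J| <= #|A|)%N ->
  Inv ((\sum_(i in J | lof i == l) 1) / #|A|%:R) (sqrtC (nu l (A :\ u) J rho))
      ((\sum_(i in J | lof i == l) sqrtC (nu l (A :\ u) (J :\ i) (upd rho i u))) / #|A|%:R)
      (nu l A J rho).
Proof.
move=> uA JA; rewrite !sum_lof.
have fs := fst_snd l; have sf : pair_snd l != pair_fst l by rewrite eq_sym.
rewrite /nu !in_setD1 !eqxx (negbTE fs) (negbTE sf) /= !ffunE !eqxx (negbTE fs) (negbTE sf).
case: (boolP (pair_fst l \in J)) => fJ; case: (boolP (pair_snd l \in J)) => sJ /=.
- have c2 : (2 <= #|A|)%N.
    apply: leq_trans JA.
    apply: leq_trans (_ : #|[set pair_fst l; pair_snd l]| <= #|J|)%N;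
      first by rewrite cards2 fs.
    by apply: subset_leq_card; apply/subsetP => i; rewrite !inE => /orP [] /eqP ->.
  have -> : (1 + 1 : C) = 2 by [].
  exact: Inv_two (f0 l) uA c2.
- rewrite !addr0 sqrCK ?f0 //.
  exact: (Inv_one (fun v => f0 l v (rho (pair_snd l))) uA).
- rewrite !add0r sqrCK ?f0 //.
  exact: (Inv_one (fun v => f0 l (rho (pair_fst l)) v) uA).
- rewrite !addr0 !mul0r sqrCK ?f0 //; split; rewrite ?f0 ?exprn_ge0 ?lexx //.
  by rewrite expr0n /= !mul0r addr0 lexx.
  by rewrite subr0 mul1r lexx.
Qed.


Lemma sum_reorg B J rho u :
  \sum_(i in J) \prod_l sqrtC (nu l B (J :\ i) (upd rho i u)) =
  \sum_l (\sum_(i in J | lof i == l) sqrtC (nu l B (J :\ i) (upd rho i u)))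
          * \prod_(l' | l' != l) sqrtC (nu l' B J rho).
Proof.
rewrite (partition_big lof predT) //=; apply: eq_bigr => l _.
rewrite mulr_suml; apply: eq_bigr => i /andP [iJ /eqP li].
rewrite (bigD1 l) //=; congr (_ * _); apply: eq_bigr => l' l'l.
rewrite nu_frame //; apply/eqP => e; move: l'l;
  by rewrite -li e ?lof_fst ?lof_snd eqxx.
Qed.

Lemma sumc J : \sum_l \sum_(i in J | lof i == l) (1 : C) = #|J|%:R.
Proof. by rewrite -(partition_big lof predT) //= sumr_const. Qed.

Theorem T_bound a : forall A J rho, #|A| = a ->
  T A J rho <= (a ^_ #|J|)%:R * \prod_l sqrtC (nu l A J rho).
Proof.
have RHS0 : forall a A J rho, 0 <= (a ^_ #|J|)%:R * \prod_l sqrtC (nu l A J rho).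
  by move=> *; rewrite mulr_ge0 ?ler0n // prodr_ge0 // => l _; rewrite sqrtC_ge0 nu_ge0.
elim: a => [|a' IH] A J rho cA.
  case: (eqVneq #|J| 0%N) => [/cards0_eq ->|J0].
    rewrite T_empty cards0 ffactn0 mul1r /F; apply: ler_prod => l _.
    by rewrite f0 /nu !in_set0 /= sqrCK ?f0.
  by rewrite T_zero ?RHS0 // cA lt0n.
case: (eqVneq #|J| 0%N) => [/cards0_eq ->|J0].
  rewrite T_empty cards0 ffactn0 mul1r /F; apply: ler_prod => l _.
  by rewrite f0 /nu !in_set0 /= sqrCK ?f0.
case: (ltnP a'.+1 #|J|) => [lt|JA]; first by rewrite T_zero ?RHS0 // cA.
have [u uA] : exists u, u \in A.
  by apply/set0Pn; apply/eqP => A0; rewrite A0 cards0 in cA.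
have cB : #|A :\ u| = a' by move: cA; rewrite (cardsD1 u A) uA => -[].
move: J0 JA; case Ej : #|J| => [//|j'] _ JA.
rewrite (T_split _ _ uA).
set B := A :\ u.
set X := fun l => sqrtC (nu l B J rho).
set E := fun l => \sum_(i in J | lof i == l) sqrtC (nu l B (J :\ i) (upd rho i u)).
have b1 : T B J rho <= (a' ^_ j'.+1)%:R * \prod_l X l.
  by have := IH B J rho cB; rewrite Ej.
have b2 : \sum_(i in J) T B (J :\ i) (upd rho i u) <=
          (a' ^_ j')%:R * \sum_l E l * \prod_(l' | l' != l) X l'.
  rewrite -sum_reorg mulr_sumr; apply: ler_sum => i iJ.
  have := IH B (J :\ i) (upd rho i u) cB.
  have cJi : #|J :\ i| = j' by move: Ej; rewrite (cardsD1 i J) iJ => -[].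
  by rewrite cJi.
apply: le_trans (lerD b1 b2) _.
set a := a'.+1.
have a0 : (a%:R : C) != 0 by rewrite pnatr_eq0.
have HI := @Inv_fin _ 'I_k (fun l => (\sum_(i in J | lof i == l) 1) / a%:R) X
   (fun l => E l / a%:R) (fun l => nu l A J rho).
have sig : \sum_l (\sum_(i in J | lof i == l) (1 : C)) / a%:R = j'.+1%:R / a%:R.
  by rewrite -mulr_suml sumc Ej.
rewrite sig in HI.
have s0 : forall l, 0 <= (\sum_(i in J | lof i == l) (1 : C)) / a%:R.
  by move=> l; rewrite divr_ge0 ?ler0n // sumr_ge0 // => i _; rewrite ler01.
have sg0 : 0 < j'.+1%:R / (a%:R : C) by rewrite divr_gt0 ?ltr0n.
have sg1 : j'.+1%:R / (a%:R : C) <= 1.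
  by rewrite ler_pdivrMr ?ltr0n // mul1r ler_nat.
have JA' : (#|J| <= #|A|)%N by rewrite Ej cA.
have IL : forall l, Inv ((\sum_(i in J | lof i == l) 1) / a%:R) (X l) (E l / a%:R) (nu l A J rho).
  by move=> l; have := Inv_l l rho uA JA'; rewrite cA.
have := HI s0 sg1 IL.
move/(Inv_final sg0 sg1); rewrite sqrtC_prod; last by move=> l; exact: nu_ge0.
move=> fin.
have ff1 : (a ^_ j'.+1)%:R * (1 - j'.+1%:R / a%:R) = (a' ^_ j'.+1)%:R :> C.
  have e : (a ^_ j'.+1 * (a - j'.+1) = a * a' ^_ j'.+1)%N.
    by rewrite -ffactnSr ffactSS.
  have e' : (a ^_ j'.+1)%:R * (a%:R - j'.+1%:R) = a%:R * (a' ^_ j'.+1)%:R :> C.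
    by rewrite -natrB ?(leq_trans JA) // -!natrM e.
  apply: (mulfI a0); rewrite -e'; field; exact: a0.
have ff2 : (a ^_ j'.+1)%:R / a%:R = (a' ^_ j')%:R :> C.
  by rewrite ffactSS natrM mulrC mulKf.
apply: le_trans (ler_wpM2l (ler0n _ _) fin).
rewrite mulrDr mulrA ff1 mulr_sumr; apply: lerD => //.
rewrite mulr_sumr; apply: ler_sum => l _.
rewrite -ff2 le_eqVlt; apply/orP; left; apply/eqP; ring.
Qed.

End Comb.

Section Sym.
Variables (C : numClosedFieldType) (k n : nat).
Local Notation m := (2 * k)%N.

Definition G (Y : 'I_k -> 'I_n -> 'I_n -> C) :=
  \sum_(r : {ffun 'I_m -> 'I_n} | injectiveb r)
     \prod_(l < k) Y l (r (pair_fst l)) (r (pair_snd l)).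

Lemma G_ext Y1 Y2 : (forall l a b, Y1 l a b = Y2 l a b) -> G Y1 = G Y2.
Proof. by move=> h; apply: eq_bigr => r _; apply: eq_bigr => l _; rewrite h. Qed.

Lemma slot_ne (l l0 : 'I_k) (i j : 'I_m) : l != l0 -> lof i = l -> lof j = l0 -> i != j.
Proof. by move=> ll0 li lj; apply: contra ll0 => /eqP e; rewrite -li -lj e. Qed.

Lemma G_swap Y l0 :
  G Y = G (fun l => if l == l0 then (fun a b => Y l b a) else Y l).
Proof.
set s := tperm (pair_fst l0) (pair_snd l0).
pose h (r : {ffun 'I_m -> 'I_n}) : {ffun 'I_m -> 'I_n} := [ffun i => r (s i)].
have hK : involutive h by move=> r; apply/ffunP => i; rewrite !ffunE tpermK.
rewrite /G (reindex_inj (can_inj hK)) /=.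
apply: eq_big => r.
  apply/injectiveP/injectiveP => ir i j.
    move=> e; apply: (@perm_inj _ s); apply: ir; by rewrite !ffunE !tpermK.
  by rewrite !ffunE => /ir /perm_inj.
move=> _; apply: eq_bigr => l _; rewrite !ffunE.
case: (eqVneq l l0) => [->|ll0].
  by rewrite /s tpermL tpermR.
rewrite /s !tpermD //.
- by apply: (@slot_ne l0 l); rewrite ?lof_fst ?lof_snd // eq_sym.
- by apply: (@slot_ne l0 l); rewrite ?lof_fst ?lof_snd // eq_sym.
- by apply: (@slot_ne l0 l); rewrite ?lof_fst ?lof_snd // eq_sym.
- by apply: (@slot_ne l0 l); rewrite ?lof_fst ?lof_snd // eq_sym.
Qed.

Lemma G_sym Y l0 :
  G Y = G (fun l => if l == l0 then (fun a b => (Y l a b + Y l b a) / 2%:R) else Y l).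
Proof.
have two : (2%:R : C) != 0 by rewrite pnatr_eq0.
have -> : G (fun l => if l == l0 then (fun a b => (Y l a b + Y l b a) / 2%:R) else Y l)
   = (G Y + G (fun l => if l == l0 then (fun a b => Y l b a) else Y l)) / 2%:R.
  rewrite /G -big_split mulr_suml /=; apply: eq_bigr => r _.
  set R := \prod_(l < k | l != l0) Y l (r (pair_fst l)) (r (pair_snd l)).
  set x := r (pair_fst l0); set y := r (pair_snd l0).
  have e1 : forall Y' : 'I_k -> 'I_n -> 'I_n -> C, (forall l, l != l0 -> Y' l = Y l) ->
      \prod_(l < k) Y' l (r (pair_fst l)) (r (pair_snd l)) = Y' l0 x y * R.
    move=> Y' hY; rewrite (bigD1 l0) //=; congr (_ * _).
    by apply: eq_bigr => l /hY ->.
  rewrite (e1 (fun l => if l == l0 then (fun a b => (Y l a b + Y l b a) / 2%:R) else Y l));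
    last by move=> l /negbTE ->.
  rewrite (e1 (fun l => if l == l0 then (fun a b => Y l b a) else Y l));
    last by move=> l /negbTE ->.
  rewrite (e1 Y) // eqxx.
  by field.
by rewrite -G_swap; field.
Qed.

Definition symz (Y : 'I_k -> 'I_n -> 'I_n -> C) l a b := (Y l a b + Y l b a) / 2%:R.

Lemma G_symall Y : G Y = G (symz Y).
Proof.
have two : (2%:R : C) != 0 by rewrite pnatr_eq0.
have H : forall sq : seq 'I_k, G Y = G (fun l => if l \in sq then symz Y l else Y l).
  elim => [|l0 sq IH]; first by apply: G_ext => l a b; rewrite in_nil.
  rewrite IH (G_sym _ l0); apply: G_ext => l a b; rewrite in_cons.
  case: (eqVneq l l0) => [->|] /=; last by [].
  case: (l0 \in sq); rewrite /symz //.
  by field.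
rewrite (H (enum 'I_k)); apply: G_ext => l a b; by rewrite mem_enum.
Qed.

End Sym.

Lemma Pr_T k n rho r :
  @Pr k n setT setT rho r = injectiveb r.
Proof.
apply/PrP/injectiveP => [[_ _ h3] i j e|ir]; first by apply: h3; rewrite ?in_setT.
split => //; last by move=> i j _ _; apply: ir.
  by move=> i; rewrite in_setT.
by move=> i; rewrite !in_setT.
Qed.

Theorem mainTheorem7 (C : numClosedFieldType) (k n : nat)
    (hn : (2 <= n)%N) (hk0 : (0 < k)%N) (hk : (k <= n./2)%N)
    (Z : 'I_k -> 'I_n -> 'I_n -> C) :
  `|gnhaf Z|
    <= \prod_(l < k) sqrtC ((n * (n - 1))%:R^-1 *
         \sum_(r : 'I_n) \sum_(s : 'I_n | s != r)
            `|(Z l r s + Z l s r) / 2%:R| ^+ 2)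
  /\
  \prod_(l < k) sqrtC ((n * (n - 1))%:R^-1 *
         \sum_(r : 'I_n) \sum_(s : 'I_n | s != r)
            `|(Z l r s + Z l s r) / 2%:R| ^+ 2)
    <= \prod_(l < k) sqrtC ((n * (n - 1))%:R^-1 *
         \sum_(r : 'I_n) \sum_(s : 'I_n | s != r) `|Z l r s| ^+ 2).
Proof.
have k2n : (2 * k <= n)%N.
  have := odd_double_half n; rewrite -!addnn; lia.
split.
  set fW := fun l a b => `|(Z l a b + Z l b a) / (2%:R : C)|.
  have f0 : forall l a b, 0 <= fW l a b by move=> *; exact: normr_ge0.
  have n0 : (0 < n)%N by apply: leq_trans hn.
  set rho0 : {ffun 'I_(2 * k) -> 'I_n} := [ffun _ => Ordinal n0].
  set N := ((n - 2 * k)`!)%:R / (n`!)%:R : C.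
  have N0 : 0 <= N by rewrite divr_ge0 ?ler0n.
  have -> : gnhaf Z = N * G Z by [].
  rewrite G_symall normrM (ger0_norm N0).
  have H1 : `|G (symz Z)| <= T fW setT setT rho0.
    apply: le_trans (ler_norm_sum _ _ _) _.
    rewrite /T; under [in X in _ <= X]eq_bigl do rewrite Pr_T.
    by apply: ler_sum => r _; rewrite normr_prod.
  have cT : #|[set: 'I_n]| = n by rewrite cardsT card_ord.
  have H2 := @T_bound _ _ _ fW f0 n setT setT rho0 cT.
  apply: le_trans (ler_wpM2l N0 (le_trans H1 H2)) _.
  rewrite cardsT card_ord mulrA.
  have -> : N * (n ^_ (2 * k))%:R = 1.
    rewrite /N mulrAC -natrM mulnC ffact_fact // divff // pnatr_eq0 -lt0n.
    exact: fact_gt0.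
  rewrite mul1r le_eqVlt; apply/orP; left; apply/eqP; apply: eq_bigr => l _.
  rewrite /nu !in_setT /nrm2 cardsT card_ord; congr (sqrtC (_ * _)).
  apply: eq_big => [v|v _]; first by rewrite in_setT.
  by apply: eq_bigl => w; rewrite in_setT.
apply: ler_prod => l _; rewrite sqrtC_ge0 mulr_ge0 ?invr_ge0 ?ler0n ?sumr_ge0 //=;
  last by move=> r _; rewrite sumr_ge0 // => s _; rewrite exprn_ge0.
rewrite ler_sqrtC ?qualifE /=; last 2 first.
- by rewrite mulr_ge0 ?invr_ge0 ?ler0n ?sumr_ge0 // => r _; rewrite sumr_ge0 // => s _; rewrite exprn_ge0.
- by rewrite mulr_ge0 ?invr_ge0 ?ler0n ?sumr_ge0 // => r _; rewrite sumr_ge0 // => s _; rewrite exprn_ge0.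
apply: ler_wpM2l; first by rewrite invr_ge0 ler0n.
have two : (2%:R : C) != 0 by rewrite pnatr_eq0.
have sw : \sum_(r : 'I_n) \sum_(s : 'I_n | s != r) `|Z l s r| ^+ 2
        = \sum_(r : 'I_n) \sum_(s : 'I_n | s != r) `|Z l r s| ^+ 2.
  rewrite (exchange_big_dep predT) //=; apply: eq_bigr => r _.
  by apply: eq_bigl => s; rewrite eq_sym.
apply: le_trans (_ : _ <= (\sum_(r : 'I_n) \sum_(s : 'I_n | s != r) `|Z l r s| ^+ 2
     + \sum_(r : 'I_n) \sum_(s : 'I_n | s != r) `|Z l s r| ^+ 2) / 2%:R) _; last first.
  by rewrite sw le_eqVlt; apply/orP; left; apply/eqP; field.
rewrite -!big_split /= mulr_suml; apply: ler_sum => r _.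
rewrite -big_split /= mulr_suml; apply: ler_sum => s _.
set x := Z l r s; set y := Z l s r.
have nx := normr_ge0 x; have ny := normr_ge0 y.
apply: le_trans (_ : ((`|x| + `|y|) / 2%:R) ^+ 2 <= _).
  rewrite lerXn2r ?qualifE /= ?normr_ge0 ?divr_ge0 ?addr_ge0 ?ler0n //.
  by rewrite normf_div normr_nat ler_wpM2r ?invr_ge0 ?ler0n // ler_normD.
rewrite -subr_ge0.
have -> : (`|x| ^+ 2 + `|y| ^+ 2) / 2%:R - ((`|x| + `|y|) / 2%:R) ^+ 2
        = (`|x| - `|y|) ^+ 2 / 4%:R by field; rewrite ?two.
apply: divr_ge0; last by rewrite ler0n.
by rewrite -realEsqr rpredB // ger0_real.
Qed.
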